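(* Let $X,Y\in\mathcal L^2$. Then $(X,Y)\in\mathrm{IC}_0$ if and only if $(X,Y)$ is quasi-independent.
   Context: All random variables live on an atomless probability space. $\mathcal L^2$ denotes the set of non-degenerate real random variables with finite variance. A function $g:\mathbb R\to\mathbb R$ is admissible for $(X,Y)$ if it is measurable and $g(X),g(Y)\in\mathcal L^2$. For $r\in[-1,1]$, $(X,Y)\in\mathrm{IC}_r$ ($(X,Y)$ has invariant correlation $r$) means $X,Y\in\mathcal L^2$ and $\mathrm{Corr}(X,Y)=\mathrm{Corr}(g(X),g(Y))=r$ for all admissible $g$. A random vector $(X,Y)$ with joint distribution function $H$ and marginal distribution functions $F$ (of $X$) and $G$ (of $Y$) is quasi-independent if $\frac{H(x,y)+H(y,x)}{2}=\frac12F(x)G(y)+\frac12F(y)G(x)$ for all $x,y\in\mathbb R$. *)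

(* Defs.v *)
From HB Require Import structures.
From mathcomp Require Import all_boot all_order all_algebra.
From mathcomp Require Import all_classical all_reals all_analysis.
Set Implicit Arguments. Unset Strict Implicit. Unset Printing Implicit Defensive.
Import Order.TTheory GRing.Theory Num.Theory.
Local Open Scope classical_set_scope.
Local Open Scope ring_scope.

Section defs.
Context {d : measure_display} {T : measurableType d} {R : realType}
  (P : probability T R).

Definition atomless : Prop :=
  forall A : set T, measurable A -> (0 < P A)%E ->
    exists B : set T, [/\ measurable B, B `<=` A, (0 < P B)%E & (P B < P A)%E].

Definition nondegenerate (X : T -> R) : Prop :=
  ~ (exists c : R, P [set t | X t = c] = 1%E).

(* membership in \mathcal L^2: non-degenerate with finite variance
   (i.e. measurable and square integrable) *)
Definition inL2 (X : T -> R) : Prop :=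
  X \in Lfun P 2%:E /\ nondegenerate X.

Definition corr (X Y : T -> R) : R :=
  fine (covariance P X Y) /
    (Num.sqrt (fine ('V_P[X])) * Num.sqrt (fine ('V_P[Y]))).

Definition admissible (X Y : T -> R) (g : R -> R) : Prop :=
  [/\ measurable_fun [set: R] g, inL2 (g \o X) & inL2 (g \o Y)].

Definition IC (r : R) (X Y : T -> R) : Prop :=
  [/\ inL2 X, inL2 Y, corr X Y = r &
      forall g : R -> R, admissible X Y g -> corr (g \o X) (g \o Y) = r].

Definition jointdf (X Y : T -> R) (x y : R) : R :=
  fine (P [set t | X t <= x /\ Y t <= y]).
Definition margdf (X : T -> R) (x : R) : R :=
  fine (P [set t | X t <= x]).

Definition quasi_independent (X Y : T -> R) : Prop :=
  forall x y : R,
    (jointdf X Y x y + jointdf X Y y x) / 2 =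
    margdf X x * margdf Y y / 2 + margdf X y * margdf Y x / 2.

End defs.

(* Main.v *)
Require Import Defs.
From HB Require Import structures.
From mathcomp Require Import all_boot all_order all_algebra.
From mathcomp Require Import all_classical all_reals all_analysis.
Import Order.TTheory GRing.Theory Num.Theory.
Local Open Scope ring_scope.

Set Warnings "-notation-overridden,-ambiguous-paths,-notation-incompatible-prefix,-redundant-canonical-projection".
From mathcomp Require Import measurable_realfun.
From mathcomp Require Import lra.
Local Open Scope classical_set_scope.

Lemma itv_ocE (R : realType) (a b : R) : a < b ->
  `]a, b]%classic = `]-oo, b]%classic `\` `]-oo, a]%classic.
Proof.
move=> ab; apply/seteqP; split => z /=; rewrite !in_itv /= ?andbT.
  by move=> /andP[az zb]; split => //; apply/negP; rewrite -ltNge.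
by move=> [zb /negP]; rewrite -ltNge => az; rewrite az.
Qed.

Lemma itvNyI (R : realType) (a b : R) : a < b ->
  `]-oo, b]%classic `&` `]-oo, a]%classic = `]-oo, a]%classic.
Proof.
move=> ab; apply/seteqP; split => z /=; rewrite !in_itv /=.
  by case.
by move=> za; split => //; rewrite (le_trans za) // ltW.
Qed.

Lemma uniq1 (R : realType) (m1 m2 : {measure set R -> \bar R}) :
  (forall x : R, m1 `]-oo, x]%classic = m2 `]-oo, x]%classic) ->
  (m1 [set: R] < +oo)%E -> (m2 [set: R] < +oo)%E ->
  forall A, measurable A -> m1 A = m2 A.
Proof.
move=> h f1 f2 A mA.
have := @measure_unique _ R R (@ocitv R) (fun n : nat => `](1 *- n), n%:R]%classic) erefl.
move=> /(_ (@ocitvI R) (fun n => is_ocitv _ _) (bigcup_itvT false false) m1 m2); apply => //.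
- move=> X /ocitvP [->|[[a b] /= ab ->]]; first by rewrite !measure0.
  rewrite itv_ocE // !measureD //; last first.
    by apply: (le_lt_trans _ f1); apply: le_measure; rewrite ?inE.
    by apply: (le_lt_trans _ f2); apply: le_measure; rewrite ?inE.
  by rewrite !itvNyI //; congr (_ - _)%E; [exact: h|exact: h].
- by move=> k; apply: (le_lt_trans _ f1); apply: le_measure; rewrite ?inE.
Qed.

Section secmeasure.
Context (R : realType).

Definition secx (m : {measure set (R * R) -> \bar R}) (B : set R)
  (mB : measurable B) := fun A : set R => m (A `*` B).
Definition secy (m : {measure set (R * R) -> \bar R}) (A : set R)
  (mA : measurable A) := fun B : set R => m (A `*` B).
Arguments secx m {B} mB.
Arguments secy m {A} mA.

Variables (m : {measure set (R * R) -> \bar R}) (C : set R) (mC : measurable C).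

Let secx0 : secx m mC set0 = 0%E.
Proof. by rewrite /secx set0X measure0. Qed.
Let secx_ge0 A : (0 <= secx m mC A)%E.
Proof. exact: measure_ge0. Qed.
Let secx_sigma_additive : semi_sigma_additive (secx m mC).
Proof.
move=> F mF tF mUF; rewrite /secx setX_bigcupl.
apply: (measure_semi_sigma_additive (fun n => F n `*` C)).
- by move=> n; apply: measurableX.
- apply/trivIsetP => i j _ _ ij.
  by rewrite -setXI ((trivIsetP (I:=nat)).1 tF i j) // set0X.
- by apply: bigcupT_measurable => n; apply: measurableX.
Qed.
HB.instance Definition _ := isMeasure.Build _ _ _ (secx m mC)
  secx0 secx_ge0 secx_sigma_additive.

Let secy0 : secy m mC set0 = 0%E.
Proof. by rewrite /secy setX0 measure0. Qed.
Let secy_ge0 A : (0 <= secy m mC A)%E.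
Proof. exact: measure_ge0. Qed.
Let secy_sigma_additive : semi_sigma_additive (secy m mC).
Proof.
move=> F mF tF mUF; rewrite /secy setX_bigcupr.
apply: (measure_semi_sigma_additive (fun n => C `*` F n)).
- by move=> n; apply: measurableX.
- apply/trivIsetP => i j _ _ ij.
  by rewrite -setXI ((trivIsetP (I:=nat)).1 tF i j) // setX0.
- by apply: bigcupT_measurable => n; apply: measurableX.
Qed.
HB.instance Definition _ := isMeasure.Build _ _ _ (secy m mC)
  secy0 secy_ge0 secy_sigma_additive.
End secmeasure.
Arguments secx {R} m {B} mB.
Arguments secy {R} m {A} mA.

Lemma uniq2 (R : realType) (m1 m2 : {measure set (R * R) -> \bar R}) :
  (forall a b : R, m1 (`]-oo, a]%classic `*` `]-oo, b]%classic) =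
                   m2 (`]-oo, a]%classic `*` `]-oo, b]%classic)) ->
  (m1 [set: R * R] < +oo)%E -> (m2 [set: R * R] < +oo)%E ->
  forall A, measurable A -> m1 A = m2 A.
Proof.
move=> h f1 f2.
have fin (m : {measure set (R * R) -> \bar R}) (S : set (R * R)) :
    (m [set: R * R] < +oo)%E -> measurable S -> (m S < +oo)%E.
  by move=> fm mS; apply: (le_lt_trans _ fm); apply: le_measure; rewrite ?inE.
have step1 b A : measurable A ->
    m1 (A `*` `]-oo, b]%classic) = m2 (A `*` `]-oo, b]%classic).
  move=> mA.
  have mB : measurable (`]-oo, b]%classic : set R) by [].
  have := uniq1 _ (secx m1 mB) (secx m2 mB).
  apply => //.
  - by move=> x; exact: h.
  - by apply: fin => //; apply: measurableX.
  - by apply: fin => //; apply: measurableX.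
have step2 A B : measurable A -> measurable B -> m1 (A `*` B) = m2 (A `*` B).
  move=> mA mB.
  apply: (uniq1 _ (secy m1 mA) (secy m2 mA)) => //.
  - by move=> x; exact: step1.
  - by apply: fin => //; apply: measurableX.
  - by apply: fin => //; apply: measurableX.
move=> A mA.
apply: (@measure_unique _ R _ [set A `*` B | A in measurable & B in measurable]
  (fun _ => setT)) => //.
- exact: measurable_prod_measurableType.
- move=> _ _ [A1 mA1 [B1 mB1 <-]] [A2 mA2 [B2 mB2 <-]].
  rewrite -setXI; exists (A1 `&` A2); first exact: measurableI.
  by exists (B1 `&` B2) => //; exact: measurableI.
- by move=> _; exists setT => //; exists setT => //; rewrite setXTT.
- by apply/seteqP; split => // x _; exists 0%N.
- by move=> _ [A1 mA1 [B1 mB1 <-]]; apply: step2.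
Qed.
Lemma expE d (T : measurableType d) (R : realType) (P : probability T R)
  (Z : T -> R) : ('E_P[Z] = \int[P]_w (Z w)%:E)%E.
Proof. by rewrite unlock. Qed.

Lemma fub (R : realType) (m1 m2 : probability R R) (g1 g2 : R -> R) :
  measurable_fun setT g1 -> measurable_fun setT g2 ->
  m1.-integrable setT (EFin \o g1) -> m2.-integrable setT (EFin \o g2) ->
  (m1 \x m2)%E.-integrable setT (fun z : R * R => (g1 z.1 * g2 z.2)%:E) ->
  (\int[m1 \x m2]_z (g1 z.1 * g2 z.2)%:E =
   \int[m1]_x (g1 x)%:E * \int[m2]_y (g2 y)%:E)%E.
Proof.
move=> mg1 mg2 i1 i2 i12.
rewrite -integral12_prod_meas1 // /fubini_F /=.
have cfin : (\int[m2]_y (g2 y)%:E)%E \is a fin_num by exact: integrable_fin_num.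
transitivity (\int[m1]_x ((g1 x)%:E * (fine (\int[m2]_y (g2 y)%:E))%:E))%E.
  apply: eq_integral => x _.
  under eq_integral => y _ do rewrite EFinM.
  by rewrite integralZl // fineK.
by rewrite integralZr // fineK.
Qed.

Lemma dbl (R : realType) (x y : \bar R) : x \is a fin_num -> y \is a fin_num ->
  (x + x = y + y)%E -> x = y.
Proof.
move=> /fineK hx /fineK hy; rewrite -hx -hy -!EFinD => -[h].
by congr EFin; lra.
Qed.

Definition mkf d d' (T : measurableType d) (T' : measurableType d')
  (f : T -> T') (mf : measurable_fun setT f) : {mfun T >-> T'} :=
  HB.pack f (isMeasurableFun.Build _ _ _ _ f mf).
Arguments mkf {d d' T T' f} mf.

Lemma mkfE d d' (T : measurableType d) (T' : measurableType d')
  (f : T -> T') (mf : measurable_fun setT f) : (mkf mf : T -> T') = f.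
Proof. by []. Qed.

Section key.
Context d (T : measurableType d) (R : realType) (P : probability T R).
Variables (X Y : T -> R) (mX : measurable_fun setT X) (mY : measurable_fun setT Y).
Let mV : measurable_fun setT (fun t => (X t, Y t)) := measurable_fun_pair mX mY.
Let mW : measurable_fun setT (fun t => (Y t, X t)) := measurable_fun_pair mY mX.
Let PX := distribution P (mkf mX).
Let PY := distribution P (mkf mY).
Let PV := distribution P (mkf mV).
Let PW := distribution P (mkf mW).
Let M1 := measure_add PV PW.
Let M2 := measure_add (PX \x PY)%E (PY \x PX)%E.

Hypothesis hQ : forall a b : R,
  (P [set t | (X t <= a)%R /\ (Y t <= b)%R] + P [set t | (X t <= b)%R /\ (Y t <= a)%R] =
   P [set t | (X t <= a)%R] * P [set t | (Y t <= b)%R] +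
   P [set t | (X t <= b)%R] * P [set t | (Y t <= a)%R])%E.

Lemma M1M2 A : measurable A -> M1 A = M2 A.
Proof.
apply: uniq2.
- move=> a b.
  set Q := (`]-oo, a]%classic `*` `]-oo, b]%classic).
  transitivity (PV Q + PW Q)%E; first exact: measure_addE.
  transitivity ((PX \x PY)%E Q + (PY \x PX)%E Q)%E; last exact/esym/measure_addE.
  transitivity (PX `]-oo, a]%classic * PY `]-oo, b]%classic +
     PY `]-oo, a]%classic * PX `]-oo, b]%classic)%E; last first.
    by congr (_ + _)%E; apply/esym/product_measure1E.
  rewrite /Q.
  rewrite /PV /PW /PX /PY /distribution /pushforward !mkfE.
  have -> : (fun t => (X t, Y t)) @^-1` (`]-oo, a]%classic `*` `]-oo, b]%classic)
      = [set t | X t <= a /\ Y t <= b].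
    by apply/seteqP; split => t /=; rewrite !in_itv.
  have -> : (fun t => (Y t, X t)) @^-1` (`]-oo, a]%classic `*` `]-oo, b]%classic)
      = [set t | X t <= b /\ Y t <= a].
    by apply/seteqP; split => t /=; rewrite !in_itv /= => -[].
  rewrite hQ.
  have -> : X @^-1` `]-oo, a]%classic = [set t | X t <= a].
    by apply/seteqP; split => t /=; rewrite !in_itv.
  have -> : X @^-1` `]-oo, b]%classic = [set t | X t <= b].
    by apply/seteqP; split => t /=; rewrite !in_itv.
  have -> : Y @^-1` `]-oo, a]%classic = [set t | Y t <= a].
    by apply/seteqP; split => t /=; rewrite !in_itv.
  have -> : Y @^-1` `]-oo, b]%classic = [set t | Y t <= b].
    by apply/seteqP; split => t /=; rewrite !in_itv.
  by rewrite [X in (_ + X)%E]muleC.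
- rewrite (_ : _ [set: R * R] = PV setT + PW setT)%E; last exact: measure_addE.
  have -> : PV setT = 1%E by exact: probability_setT.
  have -> : PW setT = 1%E by exact: probability_setT.
  by rewrite -EFinD ltry.
- change ((measure_add (PX \x PY)%E (PY \x PX)%E) [set: R * R] < +oo)%E.
  rewrite measure_addE.
  have pr (m1 m2 : probability R R) : (m1 \x m2)%E [set: R * R] = 1%E.
    rewrite -setXTT product_measure1E //.
    transitivity (1 * 1 : \bar R)%E; last exact: mule1.
    congr (_ * _)%E; exact: probability_setT.
  apply: (@le_lt_trans _ _ (1 + 1)%E); last by rewrite -EFinD ltry.
  by rewrite le_eqVlt; apply/orP; left; apply/eqP; congr (_ + _)%E; exact: pr.
Qed.

Lemma key_int (g : R -> R) (mg : measurable_fun setT g) :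
  (g \o X) \in Lfun P 2%:E -> (g \o Y) \in Lfun P 2%:E ->
  ('E_P[(g \o X) * (g \o Y)] = 'E_P[g \o X] * 'E_P[g \o Y])%E.
Proof.
move=> gX gY.
pose f := fun z : R * R => (g z.1 * g z.2)%:E.
have mf : measurable_fun [set: R * R] f.
  apply/measurable_EFinP; apply: measurable_funM.
  - exact: measurableT_comp mg measurable_fst.
  - exact: measurableT_comp mg measurable_snd.
have gX1 : P.-integrable setT (EFin \o (g \o X)).
  by apply/Lfun1_integrable; apply: Lfun_subset12 => //; exact: fin_num_measure.
have gY1 : P.-integrable setT (EFin \o (g \o Y)).
  by apply/Lfun1_integrable; apply: Lfun_subset12 => //; exact: fin_num_measure.
have gXY : P.-integrable setT (EFin \o ((g \o X) \* (g \o Y))).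
  by apply/Lfun1_integrable; apply: Lfun2_mul_Lfun1.
have gYX : P.-integrable setT (EFin \o ((g \o Y) \* (g \o X))).
  by apply/Lfun1_integrable; apply: Lfun2_mul_Lfun1.
have iV : P.-integrable setT (f \o (mkf mV)) by exact: gXY.
have iW : P.-integrable setT (f \o (mkf mW)) by exact: gYX.
have iPV : PV.-integrable setT f by exact: integrable_pushforward.
have iPW : PW.-integrable setT f by exact: integrable_pushforward.
have I1 : (\int[M1]_z f z = 'E_P[(g \o X) * (g \o Y)] + 'E_P[(g \o Y) * (g \o X)])%E.
  rewrite /M1 integral_measure_add // /PV /PW !integral_distribution //.
  by rewrite !expE.
have eqM (h : R * R -> \bar R) : (\int[M1]_z h z = \int[M2]_z h z)%E.
  by apply: eq_measure_integral => A mA _; apply: M1M2.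
have aM1 : (\int[M1]_z `|f z| < +oo)%E.
  rewrite /M1 ge0_integral_measure_add //; last exact: measurableT_comp.
  by rewrite lte_add_pinfty //; [move/integrableP : iPV => [] | move/integrableP : iPW => []].
have aM2 : (\int[M2]_z `|f z| < +oo)%E by rewrite -eqM.
have aM2' := aM2; rewrite /M2 ge0_integral_measure_add // in aM2'; last exact: measurableT_comp.
have iXY : (PX \x PY)%E.-integrable setT f.
  apply/integrableP; split => //; apply: le_lt_trans aM2'.
  by rewrite leeDl // integral_ge0.
have iYX : (PY \x PX)%E.-integrable setT f.
  apply/integrableP; split => //; apply: le_lt_trans aM2'.
  by rewrite leeDr // integral_ge0.
have mEg : measurable_fun setT (EFin \o g) by exact: measurableT_comp.
have iX : PX.-integrable setT (EFin \o g).
  by apply: (@integrable_pushforward _ _ _ _ _ (mkf mX) mX) => //; exact: gX1.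
have iY : PY.-integrable setT (EFin \o g).
  by apply: (@integrable_pushforward _ _ _ _ _ (mkf mY) mY) => //; exact: gY1.
have I2 : (\int[M2]_z f z = 'E_P[g \o X] * 'E_P[g \o Y] + 'E_P[g \o Y] * 'E_P[g \o X])%E.
  rewrite /M2 integral_measure_add // /f !fub //.
  rewrite /PX /PY !integral_distribution //.
  by rewrite !expE.
have := eqM f; rewrite I1 I2.
have -> : (g \o Y) * (g \o X) = (g \o X) * (g \o Y) by rewrite mulrC.
rewrite [X in (_ = _ + X)%E]muleC; apply: dbl.
- by apply: expectation_fin_num; exact: Lfun2_mul_Lfun1.
- by rewrite fin_numM // expectation_fin_num //; apply: Lfun_subset12 => //; exact: fin_num_measure.
Qed.
End key.
Arguments key_int {d T R P X Y} mX mY hQ {g} mg gX gY.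

Section rest.
Context d (T : measurableType d) (R : realType) (P : probability T R).

Lemma L2meas {Z : T -> R} : Z \in Lfun P 2%:E -> measurable_fun setT Z.
Proof. by move=> /sub_Lfun_mfun; rewrite inE. Qed.

Lemma bdd_L2 (Z : T -> R) : measurable_fun setT Z -> (forall t, `|Z t| <= 1) ->
  Z \in Lfun P 2%:E.
Proof.
move=> mZ bZ; rewrite inE/=; apply/andP; split; rewrite inE//=.
rewrite /finite_norm unlock poweR_lty//.
apply: (@le_lt_trans _ _ (\int[P]_x (cst 1%:E) x))%E.
  apply: ge0_le_integral => //.
  - by move=> t _; rewrite lee_fin powR_ge0.
  - apply/measurable_EFinP.
    apply/(@measurableT_comp _ _ _ _ _ _ (fun x : R => x `^ 2)%R) => //.
    exact/measurableT_comp.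
  - move=> t _ /=; rewrite lee_fin powR_mulrn //.
    by rewrite exprn_ile1 // bZ.
rewrite integral_cst //.
rewrite (_ : (P : {measure set T -> \bar R}) [set: T] = 1%E); last exact: probability_setT.
by rewrite mule1 ltry.
Qed.

Lemma ae_cst (h : T -> R) (S : set T) k : measurable_fun setT h ->
  measurable S -> P S = 1%E -> (forall t, S t -> h t = k) -> ('E_P[h] = k%:E)%E.
Proof.
move=> mh mS PS hS; rewrite expE.
rewrite (ae_eq_integral (cst k%:E)) //.
- rewrite integral_cst //.
  rewrite (_ : (P : {measure set T -> \bar R}) [set: T] = 1%E); last exact: probability_setT.
  by rewrite mule1.
- exact/measurable_EFinP.
- exists (~` S); split; first exact: measurableC.
    by apply: eq_trans (probability_setC P mS) _; rewrite PS subee.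
  by move=> t /= H St; apply: H => _; rewrite hS.
Qed.

Lemma DEG (Z : T -> R) c : Z \in Lfun P 2%:E -> P [set t | Z t = c] = 1%E ->
  'V_P[Z] = 0%E.
Proof.
move=> Z2 h; have mZ := L2meas Z2.
have mS : measurable [set t | Z t = c].
  by have := mZ measurableT _ (measurable_set1 c); rewrite setTI.
have EZ : ('E_P[Z] = c%:E)%E := ae_cst _ _ _ mZ mS h (fun t => id).
rewrite /variance covariance.unlock EZ /=.
apply: (ae_cst _ _ _ _ mS h).
  apply: measurable_funM; apply: measurable_funB => //.
by move=> t /= Zc; change ((Z t - c) * (Z t - c) = 0); rewrite Zc subrr mul0r.
Qed.

Lemma CS0 (Z1 Z2 : T -> R) : Z1 \in Lfun P 2%:E -> Z2 \in Lfun P 2%:E ->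
  'V_P[Z1] = 0%E -> covariance P Z1 Z2 = 0%E.
Proof.
move=> h1 h2 v0.
have Pfin : P setT \is a fin_num := fin_num_measure P _ measurableT.
have l1 := Lfun_subset12 Pfin h1.
have l2 := Lfun_subset12 Pfin h2.
have l12 := Lfun2_mul_Lfun1 h1 h2.
apply/eqP; rewrite eq_le; apply/andP; split.
  by rewrite (le_trans (covariance_le h1 h2)) // v0 sqrte0 mul0e.
rewrite -oppe_le0 -covarianceNl //.
apply: le_trans (covariance_le _ h2) _; first by rewrite rpredN.
by rewrite varianceN // v0 sqrte0 mul0e.
Qed.
End rest.
Arguments L2meas {d T R P Z}.
Arguments bdd_L2 {d T R P Z}.
Arguments CS0 {d T R P Z1 Z2}.
Arguments DEG {d T R P Z c}.

Section fin.
Context d (T : measurableType d) (R : realType) (P : probability T R).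

Lemma cov_of_corr (Z1 Z2 : T -> R) : Z1 \in Lfun P 2%:E -> Z2 \in Lfun P 2%:E ->
  corr P Z1 Z2 = 0 -> covariance P Z1 Z2 = 0%E.
Proof.
move=> h1 h2.
have Pfin : P setT \is a fin_num := fin_num_measure P _ measurableT.
have l1 := Lfun_subset12 Pfin h1.
have l2 := Lfun_subset12 Pfin h2.
have l12 := Lfun2_mul_Lfun1 h1 h2.
rewrite /corr => /eqP; rewrite mulf_eq0 invr_eq0 mulf_eq0 !sqrtr_eq0.
move=> /orP[/eqP c0|/orP[v1|v2]].
- have cf : covariance P Z1 Z2 \is a fin_num := covariance_fin_num l1 l2 l12.
  by rewrite -(fineK cf) c0.
- have f0 : fine 'V_P[Z1] = 0.
    by apply/eqP; rewrite eq_le v1 fine_ge0 // variance_ge0.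
  apply: CS0 => //; rewrite -(fineK (variance_fin_num h1)) f0 //.
- have f0 : fine 'V_P[Z2] = 0.
    by apply/eqP; rewrite eq_le v2 fine_ge0 // variance_ge0.
  rewrite covarianceC; apply: CS0 => //.
  by rewrite -(fineK (variance_fin_num h2)) f0.
Qed.

Lemma IC_cov (X Y : T -> R) : IC P 0 X Y -> forall g : R -> R,
  measurable_fun setT g -> (g \o X) \in Lfun P 2%:E -> (g \o Y) \in Lfun P 2%:E ->
  covariance P (g \o X) (g \o Y) = 0%E.
Proof.
move=> [_ _ _ H] g mg gX gY.
have [ndX|dX] := pselect (Defs.nondegenerate P (g \o X)); last first.
  have [c hc] : exists c, P [set t | (g \o X) t = c] = 1%E.
    by apply: contrapT.
  by apply: CS0 => //; exact: DEG hc.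
have [ndY|dY] := pselect (Defs.nondegenerate P (g \o Y)); last first.
  have [c hc] : exists c, P [set t | (g \o Y) t = c] = 1%E.
    by apply: contrapT.
  by rewrite covarianceC; apply: CS0 => //; exact: DEG hc.
by apply: cov_of_corr => //; apply: H; split.
Qed.

Lemma covind (A B : set R) (Z1 Z2 : T -> R) : measurable A -> measurable B ->
  measurable_fun setT Z1 -> measurable_fun setT Z2 ->
  covariance P (\1_A \o Z1) (\1_B \o Z2) =
  (P (Z1 @^-1` A `&` Z2 @^-1` B) - P (Z1 @^-1` A) * P (Z2 @^-1` B))%E.
Proof.
move=> mA mB mZ1 mZ2.
have m1 : measurable (Z1 @^-1` A) by rewrite -[_ @^-1` _]setTI; apply: mZ1.
have m2 : measurable (Z2 @^-1` B) by rewrite -[_ @^-1` _]setTI; apply: mZ2.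
have b S t : `|(\1_S : T -> R) t| <= 1.
  by rewrite indicE; case: (_ \in _); rewrite ?normr0 ?normr1.
have L1 : (\1_(Z1 @^-1` A) : T -> R) \in Lfun P 2%:E.
  by apply: bdd_L2 => //; exact: measurable_indic.
have L2 : (\1_(Z2 @^-1` B) : T -> R) \in Lfun P 2%:E.
  by apply: bdd_L2 => //; exact: measurable_indic.
have Pfin : P setT \is a fin_num := fin_num_measure P _ measurableT.
change (covariance P (\1_(Z1 @^-1` A)) (\1_(Z2 @^-1` B)) =
  (P (Z1 @^-1` A `&` Z2 @^-1` B) - P (Z1 @^-1` A) * P (Z2 @^-1` B))%E).
rewrite covarianceE; last 3 first.
- exact: Lfun_subset12 L1.
- exact: Lfun_subset12 L2.
- exact: Lfun2_mul_Lfun1 L1 L2.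
have -> : (\1_(Z1 @^-1` A) * \1_(Z2 @^-1` B) = \1_(Z1 @^-1` A `&` Z2 @^-1` B) :> (T -> R)).
  by rewrite indicI.
by rewrite !expectation_indic //; exact: measurableI.
Qed.
End fin.
Arguments cov_of_corr {d T R P Z1 Z2}.
Arguments IC_cov {d T R P X Y}.
Arguments covind {d T R P A B Z1 Z2}.

Local Close Scope classical_set_scope.

Theorem theorem1 (d : measure_display) (T : measurableType d) (R : realType)
  (P : probability T R) (hP : atomless P) (X Y : T -> R) :
  inL2 P X -> inL2 P Y -> (IC P 0 X Y <-> quasi_independent P X Y).
Proof.
move=> hX hY.
have mX := L2meas hX.1.
have mY := L2meas hY.1.
have Pfin : P setT \is a fin_num := fin_num_measure P _ measurableT.
have preI a b : [set t | X t <= a /\ Y t <= b]%classic =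
    (X @^-1` `]-oo, a]%classic `&` Y @^-1` `]-oo, b]%classic)%classic.
  by apply/seteqP; split => t /=; rewrite !in_itv.
have pre (Z : T -> R) a : [set t | Z t <= a]%classic = (Z @^-1` `]-oo, a]%classic)%classic.
  by apply/seteqP; split => t /=; rewrite !in_itv.
have mpre (Z : T -> R) a : measurable_fun setT Z ->
    measurable (Z @^-1` `]-oo, a]%classic)%classic.
  by move=> mZ; rewrite -[(_ @^-1` _)%classic]setTI; apply: mZ.
have F S : measurable S -> P S = (fine (P S))%:E.
  by move=> mS; rewrite fineK // fin_num_measure.
split.
- move=> hIC x y.
  set A := `]-oo, x]%classic.
  set B := `]-oo, y]%classic.
  have mA : measurable (A : set R) by exact: measurable_itv.
  have mB : measurable (B : set R) by exact: measurable_itv.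
  have bd S t : `|(\1_S : R -> R) t| <= 1.
    by rewrite indicE; case: (_ \in _); rewrite ?normr0 ?normr1.
  have mi (S : set R) : measurable S -> measurable_fun setT (\1_S : R -> R).
    by move=> mS; exact: measurable_indic.
  have ind (S : set R) (Z : T -> R) : measurable S -> measurable_fun setT Z ->
      ((\1_S : R -> R) \o Z) \in Lfun P 2%:E.
    move=> mS mZ; apply: bdd_L2; first exact: measurableT_comp (mi _ mS) mZ.
    by move=> t; exact: bd.
  have c11 := IC_cov hIC _ (mi _ mA) (ind _ _ mA mX) (ind _ _ mA mY).
  have c22 := IC_cov hIC _ (mi _ mB) (ind _ _ mB mX) (ind _ _ mB mY).
  have mAB : measurable_fun setT ((\1_A : R -> R) \+ \1_B).
    by apply: measurable_funD; [exact: mi|exact: mi].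
  have LX : ((\1_A : R -> R) \+ \1_B) \o X \in Lfun P 2%:E.
    have : (\1_A \o X) + (\1_B \o X) \in Lfun P 2%:E.
      apply: rpredD; first by rewrite lee_fin ler1n.
      by move=> ?; exact: (ind _ _ mA mX).
      by move=> ?; exact: (ind _ _ mB mX).
    by [].
  have LY : ((\1_A : R -> R) \+ \1_B) \o Y \in Lfun P 2%:E.
    have : (\1_A \o Y) + (\1_B \o Y) \in Lfun P 2%:E.
      apply: rpredD; first by rewrite lee_fin ler1n.
      by move=> ?; exact: (ind _ _ mA mY).
      by move=> ?; exact: (ind _ _ mB mY).
    by [].
  have c33 := IC_cov hIC _ mAB LX LY.
  have : covariance P (((\1_A : R -> R) \o X) \+ (\1_B \o X))
                      ((\1_A \o Y) \+ (\1_B \o Y)) = 0%E by exact: c33.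
  have iAX := ind _ _ mA mX; have iBX := ind _ _ mB mX.
  have iAY := ind _ _ mA mY; have iBY := ind _ _ mB mY.
  rewrite covarianceDl; [|exact: iAX|exact: iBX|exact: LY].
  rewrite covarianceDr; [|exact: iAX|exact: iAY|exact: iBY].
  rewrite covarianceDr; [|exact: iBX|exact: iAY|exact: iBY].
  rewrite c11 c22 add0e adde0 !covind //.
  have m1 := mpre _ x mX; have m2 := mpre _ y mX.
  have m3 := mpre _ x mY; have m4 := mpre _ y mY.
  rewrite (F _ (measurableI _ _ m1 m4)) (F _ (measurableI _ _ m2 m3)).
  rewrite (F _ m1) (F _ m2) (F _ m3) (F _ m4).
  move=> h; have := congr1 fine h => /= {}h.
  rewrite /jointdf /margdf !preI !pre.
  lra.
- move=> hQI.
  have hQ : forall a b : R,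
    (P [set t | (X t <= a)%R /\ (Y t <= b)%R]%classic + P [set t | (X t <= b)%R /\ (Y t <= a)%R]%classic =
     P [set t | (X t <= a)%R]%classic * P [set t | (Y t <= b)%R]%classic +
     P [set t | (X t <= b)%R]%classic * P [set t | (Y t <= a)%R]%classic)%E.
    move=> a b; have := hQI a b; rewrite /jointdf /margdf !preI !pre => e.
    have m1 := mpre _ a mX; have m2 := mpre _ b mX.
    have m3 := mpre _ a mY; have m4 := mpre _ b mY.
    rewrite (F _ (measurableI _ _ m1 m4)) (F _ (measurableI _ _ m2 m3)).
    rewrite (F _ m1) (F _ m2) (F _ m3) (F _ m4).
    rewrite -!EFinM -!EFinD; congr EFin; lra.
  have kz (g : R -> R) : measurable_fun setT g -> (g \o X) \in Lfun P 2%:E ->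
      (g \o Y) \in Lfun P 2%:E -> covariance P (g \o X) (g \o Y) = 0%E.
    move=> mg gX gY.
    rewrite covarianceE; last 3 first.
    - exact: Lfun_subset12 gX.
    - exact: Lfun_subset12 gY.
    - exact: Lfun2_mul_Lfun1 gX gY.
    rewrite (key_int mX mY hQ mg gX gY) subee //.
    by rewrite fin_numM // expectation_fin_num //; exact: Lfun_subset12.
  split => //.
  + have k0 : covariance P X Y = 0%E := kz idfun (@measurable_id _ _ setT) hX.1 hY.1.
    by rewrite /corr k0 /= mul0r.
  + move=> g [mg [gX _] [gY _]].
    by rewrite /corr kz //= mul0r.
Qed.
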